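(* Every 4-regular graph with girth at least six has a strong edge-coloring using at most 22 colors.
   Context: A strong edge-coloring of a graph is a proper edge-coloring in which, in addition, no two edges of the same color lie on a common path of length three. The girth of a graph is the length of its shortest cycle (a loop counts as a cycle of length 1 and a pair of parallel edges as a cycle of length 2). *)

(* Defs.v *)
From mathcomp Require Import all_boot.
Set Implicit Arguments. Unset Strict Implicit. Unset Printing Implicit Defensive.

Definition simple_graph (T : finType) (g : rel T) : Prop :=
  symmetric g /\ irreflexive g.

Definition regular (T : finType) (g : rel T) (k : nat) : Prop :=
  forall x : T, #|[set y | g x y]| = k.

(* Loops / parallel edges (cycles of length 1, 2) do not exist in a simple graph. *)
Definition girth_at_least (T : finType) (g : rel T) (n : nat) : Prop :=
  forall s : seq T, uniq s -> 3 <= size s -> cycle g s -> n <= size s.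

(* An edge colouring with colours in 'I_k: a function on ordered pairs that is
   symmetric on edges, so that it gives a colour to each (unordered) edge. *)
Definition edge_colouring (T : finType) (g : rel T) (k : nat)
  (c : T -> T -> 'I_k) : Prop :=
  forall x y, g x y -> c x y = c y x.

Definition proper_edge_colouring (T : finType) (g : rel T) (k : nat)
  (c : T -> T -> 'I_k) : Prop :=
  forall a b d, g a b -> g b d -> a != d -> c a b != c b d.

(* Strong: proper, and no two edges of the same colour lie on a common path of
   length three a-b-d-f (distinct vertices); the only pair not already covered
   by properness is the pair of end edges ab, df. *)
Definition strong_edge_colouring (T : finType) (g : rel T) (k : nat)
  (c : T -> T -> 'I_k) : Prop :=
  [/\ edge_colouring g c, proper_edge_colouring g c &
      forall a b d f, uniq [:: a; b; d; f] -> g a b -> g b d -> g d f ->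
        c a b != c d f].

(* Main.v *)
Require Import Defs.
From mathcomp Require Import all_boot zify.
Set Implicit Arguments. Unset Strict Implicit. Unset Printing Implicit Defensive.

Lemma greedy (I : finType) (k : nat) (E P : {set I}) (adj : rel I) (rho : I -> nat) (c0 : I -> 'I_k) :
  symmetric adj -> irreflexive adj ->
  (forall A B, A \in P -> B \in P -> adj A B -> c0 A != c0 B) ->
  (forall A, A \in E -> A \notin P ->
     #|[set B in E :\: P | adj A B && (rho A <= rho B)]| + #|c0 @: [set B in P | adj A B]| < k) ->
  exists c : I -> 'I_k, forall A B, A \in E -> B \in E -> adj A B -> c A != c B.
Proof.
move=> sym irr c0P bnd.
have main : forall n (S : {set I}), #|S| = n -> S \subset E :\: P ->
   (forall A B, A \in S -> B \in E :\: P -> rho A < rho B -> B \in S) ->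
   exists c : I -> 'I_k, (forall A, A \in P -> c A = c0 A) /\
     (forall A B, A \in P :|: S -> B \in P :|: S -> adj A B -> c A != c B).
  elim=> [|n IH] S cS sS clS.
    move/eqP: cS; rewrite cards_eq0 => /eqP ->.
    exists c0; split=> // A B; rewrite setU0; exact: c0P.
  have [A AS] : exists A, A \in S.
    apply/set0Pn; rewrite -card_gt0 cS //.
  case: (arg_minnP rho AS) => A0 A0S0 A0min.
  have A0S : A0 \in S := A0S0.
  have A0EP : A0 \in E :\: P by apply: (subsetP sS).
  have cS' : #|S :\ A0| = n by move: cS; rewrite (cardsD1 A0) A0S => -[].
  have sS' : S :\ A0 \subset E :\: P by apply: subset_trans sS; apply: subsetDl.
  have clS' : forall A B, A \in S :\ A0 -> B \in E :\: P -> rho A < rho B -> B \in S :\ A0.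
    move=> A1 B; rewrite [A1 \in _]inE => /andP[_ A1S] BEP lt; rewrite inE (clS A1 B) // ?andbT.
    rewrite inE; apply/eqP=> eB; subst B; have := A0min _ A1S; lia.
  have [c [cP cpr]] := IH _ cS' sS' clS'.
  pose F := c @: [set B in P :|: (S :\ A0) | adj A0 B].
  have cF : #|F| < k.
    have sub : F \subset (c0 @: [set B in P | adj A0 B]) :|:
                 (c @: [set B in E :\: P | adj A0 B && (rho A0 <= rho B)]).
      apply/subsetP=> y /imsetP[B]; rewrite !inE => /andP[/orP[BP|/andP[_ BS]] ad] ->.
        by rewrite (cP B BP); apply/orP; left; apply/imsetP; exists B; rewrite // inE BP.
      apply/orP; right; apply/imsetP; exists B => //.
      by rewrite inE (subsetP sS B BS) ad A0min.
    apply: leq_ltn_trans (subset_leq_card sub) _.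
    apply: leq_ltn_trans ((leq_card_setU _ _).1) _.
    have := bnd A0; rewrite !inE in A0EP; case/andP: A0EP => nP EE.
    move=> /(_ EE nP) h.
    have := leq_imset_card c [set B in E :\: P | adj A0 B && (rho A0 <= rho B)].
    lia.
  have /set0Pn [col colF] : ~: F != set0.
    apply/negP=> /eqP H0; have := cardsC F; rewrite H0 cards0 card_ord; lia.
  rewrite inE in colF.
  have A0nP : A0 \notin P by move: A0EP; rewrite inE => /andP[].
  exists (fun B => if B == A0 then col else c B); split.
    move=> B BP; case: eqP => [eB|_]; last exact: cP.
    by subst B; rewrite BP in A0nP.
  have inF : forall B, B \in P :|: S -> B != A0 -> adj A0 B -> c B \in F.
    move=> B; rewrite inE => /orP[BP|BS] nB ad; apply/imsetP; exists B => //.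
      by rewrite !inE BP ad.
    by rewrite !inE BS nB ad orbT.
  move=> B1 B2 B1in B2in ad.
  case: (eqVneq B1 A0) => [e1|n1]; case: (eqVneq B2 A0) => [e2|n2].
  - by subst; rewrite irr in ad.
  - subst B1; apply/eqP=> e; move: colF; rewrite e (inF B2) //.
  - subst B2; have ad' : adj A0 B1 by rewrite sym.
    apply/eqP=> e; move: colF; rewrite -e (inF B1) //.
  - apply: cpr => //.
      by move: B1in; rewrite !inE n1 /=.
    by move: B2in; rewrite !inE n2 /=.
have [c [_ cpr]] := main _ (E :\: P) erefl (subxx _) (fun A B _ h _ => h).
exists c => A B AE BE; apply: cpr.
  by rewrite !inE; case: (A \in P); rewrite ?AE.
by rewrite !inE; case: (B \in P); rewrite ?BE.
Qed.

Definition touch (T : finType) (g : rel T) (A B : {set T}) : bool :=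
  [exists x in A, exists y in B, (x == y) || g x y].
Definition adjE (T : finType) (g : rel T) (A B : {set T}) : bool := (A != B) && touch g A B.
Definition isE (T : finType) (g : rel T) (A : {set T}) : bool :=
  [exists x, exists y, g x y && (A == [set x; y])].
Definition Eset (T : finType) (g : rel T) : {set {set T}} := [set A | isE g A].
Definition Estar (T : finType) (g : rel T) (z : T) : {set {set T}} := [set B in Eset g | z \in B].
Definition Nb (T : finType) (g : rel T) (z : T) : {set T} := [set y | g z y].

Lemma touch_sym (T : finType) (g : rel T) : symmetric g -> symmetric (touch g).
Proof.
move=> sym A B; apply/idP/idP => /existsP[x /andP[xA /existsP[y /andP[yB h]]]];
  apply/existsP; exists y; rewrite yB /=; apply/existsP; exists x; rewrite xA /=;
  by rewrite eq_sym sym.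
Qed.

Lemma adjE_sym (T : finType) (g : rel T) : symmetric g -> symmetric (adjE g).
Proof. by move=> sym A B; rewrite /adjE eq_sym touch_sym. Qed.

Lemma adjE_irr (T : finType) (g : rel T) : irreflexive (adjE g).
Proof. by move=> A; rewrite /adjE eqxx. Qed.

Lemma isE2 (T : finType) (g : rel T) x y : g x y -> [set x; y] \in Eset g.
Proof. by move=> h; rewrite inE; apply/existsP; exists x; apply/existsP; exists y; rewrite h eqxx. Qed.

Lemma EsetP (T : finType) (g : rel T) A : A \in Eset g -> exists x y, g x y /\ A = [set x; y].
Proof. by rewrite inE => /existsP[x /existsP[y /andP[h /eqP ->]]]; exists x, y. Qed.

Section G.
End G.

Lemma ne_of (T : finType) (g : rel T) : irreflexive g -> forall x y, g x y -> x != y.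
Proof. by move=> irr x y h; apply/eqP=> e; subst; rewrite irr in h. Qed.

Lemma no_tri (T : finType) (g : rel T) : irreflexive g -> girth_at_least g 6 ->
  forall a b c, g a b -> g b c -> g c a -> False.
Proof.
move=> irr gir a b c ab bc ca.
have := gir [:: a; b; c]; rewrite /= !inE !negb_or (ne_of irr ab) (ne_of irr bc).
rewrite eq_sym (ne_of irr ca) ab bc ca /=; by move=> /(_ isT isT isT).
Qed.

Lemma no_quad (T : finType) (g : rel T) : irreflexive g -> girth_at_least g 6 ->
  forall a b c d, g a b -> g b c -> g c d -> g d a -> a != c -> b != d -> False.
Proof.
move=> irr gir a b c d ab bc cd da ac bd.
have := gir [:: a; b; c; d]; rewrite /= !inE !negb_or (ne_of irr ab) (ne_of irr bc) (ne_of irr cd).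
rewrite [a == d]eq_sym (ne_of irr da) ac bd ab bc cd da /=; by move=> /(_ isT isT isT).
Qed.

Lemma no_pent (T : finType) (g : rel T) : symmetric g -> irreflexive g -> girth_at_least g 6 ->
  forall a b c d e, g a b -> g b c -> g c d -> g d e -> g e a -> False.
Proof.
move=> sym irr gir a b c d e ab bc cd de ea.
have tri := no_tri irr gir.
have ac : a != c by apply/eqP=> E; subst c; exact: (tri a d e).
have ad : a != d by apply/eqP=> E; subst d; exact: (tri a b c).
have bd : b != d by apply/eqP=> E; subst d; exact: (tri a b e).
have be : b != e by apply/eqP=> E; subst e; exact: (tri b c d).
have ce : c != e by apply/eqP=> E; subst e; exact: (tri a b c).
have := gir [:: a; b; c; d; e]; rewrite /= !inE !negb_or (ne_of irr ab) (ne_of irr bc) (ne_of irr cd) (ne_of irr de).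
rewrite [a == e]eq_sym (ne_of irr ea) ac ad bd be ce ab bc cd de ea /=; by move=> /(_ isT isT isT).
Qed.

Lemma Estar_img (T : finType) (g : rel T) : symmetric g ->
  forall z, Estar g z = [set [set z; y] | y in Nb g z].
Proof.
move=> sym z; apply/setP=> B; apply/idP/idP.
  rewrite inE => /andP[/EsetP[x [y [xy ->]]]]; rewrite !inE => /orP[]/eqP E; subst z.
    by apply/imsetP; exists y => //; rewrite inE.
  by apply/imsetP; exists x; [rewrite inE sym | rewrite setUC].
case/imsetP=> y; rewrite inE => zy ->; by rewrite inE isE2 //= !inE eqxx.
Qed.

Lemma card_Estar (T : finType) (g : rel T) : symmetric g -> irreflexive g -> regular g 4 ->
  forall z, #|Estar g z| = 4.
Proof.
move=> sym irr reg z; rewrite Estar_img // card_in_imset; first exact: reg.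
move=> y1 y2; rewrite !inE => h1 h2 e.
have : y1 \in [set z; y2] by rewrite -e !inE eqxx orbT.
rewrite !inE => /orP[/eqP E|/eqP //]; subst; by rewrite irr in h1.
Qed.

Lemma card_bigcup_le (I T : finType) (D : {pred I}) (F : I -> {set T}) :
  #|\bigcup_(i in D) F i| <= \sum_(i in D) #|F i|.
Proof.
elim/big_rec2: _ => [|i U s _ H]; first by rewrite cards0.
apply: leq_trans ((leq_card_setU _ _).1) _; by rewrite leq_add2l.
Qed.

Lemma nbhd_sub (T : finType) (g : rel T) : symmetric g -> irreflexive g ->
  forall w w' B y, g w w' -> B \in Eset g -> B != [set w; w'] -> y \in B -> (w == y) || g w y ->
  B \in (Estar g w :\ [set w; w']) :|: (Estar g w' :\ [set w; w']) :|:
        \bigcup_(n in Nb g w :\ w') (Estar g n :\ [set w; n]).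
Proof.
move=> sym irr w w' B y ww' BE nB yB.
have BE' : isE g B by rewrite inE in BE.
case/orP=> [/eqP E|wy].
  by subst y; rewrite !inE nB BE' yB.
case: (eqVneq y w') => [E|yw'].
  by subst y; rewrite !inE nB BE' yB orbT.
case: (eqVneq B [set w; y]) => [EB|nB2].
  by rewrite !inE nB BE' EB !inE eqxx.
rewrite in_setU; apply/orP; right; apply/bigcupP; exists y.
  by rewrite !inE yw' wy.
by rewrite !inE nB2 BE' yB.
Qed.

Lemma nbhd_card (T : finType) (g : rel T) : symmetric g -> irreflexive g -> regular g 4 ->
  forall u v, g u v -> #|[set B in Eset g | adjE g [set u; v] B]| <= 24.
Proof.
move=> sym irr reg u v uv.
set A := [set u; v].
pose X w := Estar g w :\ A.
pose F w w' := \bigcup_(n in Nb g w :\ w') (Estar g n :\ [set w; n]).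
have sub : [set B in Eset g | adjE g A B] \subset (X u :|: X v) :|: (F u v :|: F v u).
  apply/subsetP=> B; rewrite inE => /andP[BE /andP[nB /existsP[x /andP[xA /existsP[y /andP[yB h]]]]]].
  rewrite eq_sym in nB.
  rewrite !inE in xA; case/orP: xA => /eqP ex; subst x.
    have := nbhd_sub sym irr uv BE nB yB h.
    rewrite -/A !in_setU => /orP[/orP[H|H]|H]; by rewrite ?H ?orbT.
  have vu : g v u by rewrite sym.
  have nB' : B != [set v; u] by rewrite setUC.
  have := nbhd_sub sym irr vu BE nB' yB h.
  rewrite [[set v; u]]setUC -/A !in_setU => /orP[/orP[H|H]|H]; by rewrite ?H ?orbT.
have cX : forall w w', g w w' -> (w \in A) -> #|Estar g w :\ A| = 3.
  move=> w w' ww' wA; have := cardsD1 A (Estar g w); rewrite card_Estar //.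
  suff -> : A \in Estar g w by move=> [].
  by rewrite inE wA isE2.
have cF : forall w w', g w w' -> #|F w w'| <= 9.
  move=> w w' ww'; apply: leq_trans (card_bigcup_le _ _) _.
  apply: leq_trans (_ : \sum_(n in Nb g w :\ w') 3 <= _).
    apply: leq_sum => n; rewrite !inE => /andP[_ wn].
    have := cardsD1 [set w; n] (Estar g n); rewrite card_Estar //.
    suff -> : [set w; n] \in Estar g n by move=> /= h; rewrite add1n in h; case: h => ->.
    by rewrite inE isE2 // !inE eqxx orbT.
  rewrite sum_nat_const.
  have := cardsD1 w' (Nb g w); rewrite reg inE ww' => /= h; rewrite add1n in h; by case: h => <-.
apply: leq_trans (subset_leq_card sub) _.
apply: leq_trans ((leq_card_setU _ _).1) _.
have h1 := (leq_card_setU (X u) (X v)).1.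
have h2 := (leq_card_setU (F u v) (F v u)).1.
have := cX u v uv; have := cX v u; rewrite sym uv => /(_ isT).
rewrite /A !inE !eqxx orbT => /(_ isT) e1 /(_ isT) e2.
have := cF u v uv; have := cF v u; rewrite sym uv => /(_ isT).
rewrite /X in h1 *; rewrite /A in h1 e1 e2 h2 *.
lia.
Qed.

Definition Rt (T : finType) (g : rel T) : {set T} := [set r | root g r == r].
Definition A1 (T : finType) (g : rel T) : {set T} := [set a | g (root g a) a].
Definition chi (T : finType) (g : rel T) (a : T) : T :=
  odflt a [pick y | g a y && (y != root g a)].
Definition Pset (T : finType) (g : rel T) : {set {set T}} := [set [set a; chi g a] | a in A1 g].

Lemma chiP (T : finType) (g : rel T) : regular g 4 ->
  forall a, g a (chi g a) && (chi g a != root g a).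
Proof.
move=> reg a; rewrite /chi; case: pickP => [y hy //|H] /=.
exfalso; have : Nb g a \subset [set root g a].
  apply/subsetP=> y; rewrite !inE => ay; have := H y; rewrite /= ay /=.
  by move/negbFE.
move/subset_leq_card; rewrite cards1 reg. done.
Qed.

Lemma root_conn (T : finType) (g : rel T) : symmetric g ->
  forall x y, connect g x y -> root g x = root g y.
Proof. by move=> sym x y /(rootP (sym_connect_sym sym)). Qed.

Lemma Pset_sub (T : finType) (g : rel T) : regular g 4 -> Pset g \subset Eset g.
Proof.
move=> reg; apply/subsetP=> A /imsetP[a _ ->]; apply: isE2.
by case/andP: (chiP reg a).
Qed.

Ltac cl := solve [ done | rewrite (_ : forall b : bool, b = b) //; fail | match goal with s : symmetric _ |- _ => rewrite s; done end | rewrite eq_sym; done ].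

Lemma F1 (T : finType) (g : rel T) : symmetric g -> irreflexive g -> regular g 4 ->
  girth_at_least g 6 ->
  forall A B, A \in Pset g -> B \in Pset g -> A != B -> ~~ touch g A B.
Proof.
move=> sym irr reg gir A B /imsetP[a]; rewrite inE => ra -> /imsetP[b]; rewrite inE => rb -> nAB.
have nab : a != b.
  apply/eqP=> E; subst b; by rewrite eqxx in nAB.
move: (chiP reg a) (chiP reg b) nAB; move: (chi g a) (chi g b) => x y /andP[ax xr] /andP[bY yr] nAB.
apply/negP => /existsP[w /andP[wA /existsP[z /andP[zB h]]]].
have cab : connect g a b.
  apply: (@connect_trans _ _ w).
    move: wA; rewrite !inE => /orP[]/eqP ->; [exact: connect0 | exact: connect1].
  apply: (@connect_trans _ _ z).
    by case/orP: h => [/eqP ->|h]; [exact: connect0 | exact: connect1].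
  move: zB; rewrite !inE => /orP[]/eqP ->; [exact: connect0 | apply: connect1; by rewrite sym].
have eroot := root_conn sym cab.
rewrite -eroot in rb yr.
set r := root g a in ra xr rb yr eroot.
have tri := no_tri irr gir; have quad := no_quad irr gir; have pent := no_pent sym irr gir.
move: wA zB; rewrite !inE => /orP[]/eqP ew /orP[]/eqP ez; subst w z; case/orP: h => [/eqP E|h].
- by rewrite E eqxx in nab.
- by apply: (tri r a b) ; cl.
- subst a; by apply: (tri r y b) ; cl.
- by apply: (quad r a y b) ; cl.
- subst b; by apply: (tri r a x) ; cl.
- by apply: (quad r b x a) ; cl.
- rewrite -E in bY; by apply: (quad r a x b) ; cl.
- by apply: (pent r a x y b) ; cl.
Qed.

Lemma Pstar_le1 (T : finType) (g : rel T) : symmetric g -> irreflexive g -> regular g 4 ->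
  girth_at_least g 6 -> forall p, #|Estar g p :&: Pset g| <= 1.
Proof.
move=> sym irr reg gir p; rewrite leqNgt; apply/negP=> /card_gt1P[A [B []]].
rewrite !inE => /andP[/andP[_ pA] AP] /andP[/andP[_ pB] BP] nAB.
have := F1 sym irr reg gir AP BP nAB; apply/negP/negPn.
by apply/existsP; exists p; rewrite pA; apply/existsP; exists p; rewrite pB eqxx.
Qed.

Lemma root_edge_P (T : finType) (g : rel T) : symmetric g -> irreflexive g -> regular g 4 ->
  girth_at_least g 6 -> forall r a, r \in Rt g -> g r a ->
  4 <= #|[set B in Pset g | adjE g [set r; a] B]|.
Proof.
move=> sym irr reg gir r a; rewrite inE => /eqP rr ra.
have rootb : forall b, g r b -> root g b = r.
  by move=> b rb; rewrite -(root_conn sym (connect1 rb)).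
have sub : [set [set b; chi g b] | b in Nb g r] \subset [set B in Pset g | adjE g [set r; a] B].
  apply/subsetP=> B /imsetP[b]; rewrite inE => rb ->.
  have /andP[bc cr] := chiP reg b; rewrite rootb // in cr.
  rewrite inE; apply/andP; split.
    by apply/imsetP; exists b; rewrite // inE rootb.
  apply/andP; split.
    apply/eqP=> E; have : r \in [set b; chi g b] by rewrite -E !inE eqxx.
    rewrite !inE => /orP[]/eqP E2.
      by rewrite E2 irr in rb.
    by rewrite E2 eqxx in cr.
  apply/existsP; exists r; rewrite !inE eqxx /=; apply/existsP; exists b; by rewrite !inE eqxx rb orbT.
apply: leq_trans (subset_leq_card sub); rewrite card_in_imset ?reg //.
move=> b1 b2; rewrite !inE => rb1 rb2 E.
have : b1 \in [set b2; chi g b2] by rewrite -E !inE eqxx.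
rewrite !inE => /orP[]/eqP // E2.
have /andP[bc _] := chiP reg b2; rewrite -E2 in bc.
exfalso; apply: (no_tri irr gir rb2 bc); by rewrite sym.
Qed.

Definition Ball (T : finType) (g : rel T) (n : nat) : {set T} :=
  iter n (fun S => S :|: [set y | [exists z in S, g z y]]) (Rt g).

Lemma reach_all (T : finType) (g : rel T) : symmetric g -> forall x, exists n, x \in Ball g n.
Proof.
move=> sym x.
have c : connect g (root g x) x by rewrite (sym_connect_sym sym); exact: connect_root.
have rR : root g x \in Rt g by rewrite inE (root_root (sym_connect_sym sym)).
case/connectP: c => p pth ->.
suff : forall p r m, r \in Ball g m -> path g r p -> last r p \in Ball g (size p + m).
  by move=> /(_ p _ 0 rR pth) h; exists (size p + 0).
elim=> [|y q IH] r m rB; first by rewrite add0n.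
rewrite [path _ _ _]/= => /andP[ry pq].
rewrite [last _ _]/= (_ : size (y :: q) + m = size q + m.+1); last by rewrite /= addSnnS.
apply: IH pq.
by rewrite /Ball iterS -/(Ball g m) !inE; apply/orP; right; apply/existsP; exists r; rewrite rB ry.
Qed.

Lemma rho_le (T : finType) (d : T -> nat) (A : {set T}) x : x \in A ->
  (\max_y d y) - \max_(y in A) ((\max_y d y) - d y) <= d x.
Proof.
move=> xA; have h1 := @leq_bigmax_cond _ (fun y => y \in A) (fun y => \max_z d z - d y) x xA.
have h2 := @leq_bigmax _ d x. lia.
Qed.

Lemma rho_ex (T : finType) (d : T -> nat) (A : {set T}) x0 : x0 \in A ->
  exists2 x, x \in A & (\max_y d y) - \max_(y in A) ((\max_y d y) - d y) = d x.
Proof.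
move=> x0A; have : 0 < #|A| by apply/card_gt0P; exists x0.
case/(eq_bigmax_cond (fun y => \max_z d z - d y)) => x xA ->; exists x => //.
have := @leq_bigmax _ d x; lia.
Qed.

Lemma ar (S I Np Nn N L R : nat) : N <= 24 -> Np + Nn = N -> I <= Np -> 3 <= L -> L + R = Nn -> S <= R -> S + I < 22.
Proof. lia. Qed.
Lemma ar0 (S I Np Nn N : nat) : N <= 24 -> Np + Nn = N -> I <= 1 -> S <= Nn -> 4 <= Np -> S + I < 22.
Proof. lia. Qed.

Lemma ar1 a b : a + b = 4 -> a <= 1 -> 3 <= b.
Proof. lia. Qed.

Theorem lemma2 (T : finType) (g : rel T) :
  simple_graph g -> regular g 4 -> girth_at_least g 6 ->
  exists c : T -> T -> 'I_22, strong_edge_colouring g c.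
Proof.
move=> [sym irr] reg gir.
pose d x := ex_minn (reach_all sym x).
have d0 : forall x, d x = 0 -> x \in Rt g.
  move=> x; rewrite /d; case: ex_minnP => n xin _ E; by move: xin; rewrite E.
have dS : forall x, 0 < d x -> exists2 p, g p x & d p < d x.
  move=> x; rewrite /d; case: ex_minnP => n xin nmin.
  case: n xin nmin => [//|m] xin nmin _.
  move: xin; rewrite /Ball iterS -/(Ball g m) inE => /orP[xm|].
    by have := nmin _ xm; rewrite ltnn.
  rewrite inE => /existsP[z /andP[zm zx]]; exists z => //.
  case: ex_minnP => k _ kmin; rewrite ltnS; exact: kmin.
pose M := \max_y d y.
pose rho (A : {set T}) := M - \max_(y in A) (M - d y).
have rle : forall (A : {set T}) x, x \in A -> rho A <= d x := fun A x h => rho_le d h.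
have rex : forall (A : {set T}) x0, x0 \in A -> exists2 x, x \in A & rho A = d x := fun A x0 h => rho_ex d h.
pose c0 := fun _ : {set T} => (ord0 : 'I_22).
have c0P : forall A B, A \in Pset g -> B \in Pset g -> adjE g A B -> c0 A != c0 B.
  move=> A B AP BP /andP[nAB t]; by rewrite (negbTE (F1 sym irr reg gir AP BP nAB)) in t.
have PE := Pset_sub reg.
have bnd : forall A, A \in Eset g -> A \notin Pset g ->
    #|[set B in Eset g :\: Pset g | adjE g A B && (rho A <= rho B)]| +
    #|c0 @: [set B in Pset g | adjE g A B]| < 22.
  move=> A AE AnP.
  have [u [v [uv EA]]] := EsetP AE.
  have hN := nbhd_card sym irr reg uv; rewrite -EA in hN.
  set N := [set B in Eset g | adjE g A B] in hN.
  set Nn := [set B in Eset g :\: Pset g | adjE g A B].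
  set Np := [set B in Pset g | adjE g A B].
  set Sge := [set B in Eset g :\: Pset g | adjE g A B && (rho A <= rho B)].
  have hNN : #|Np| + #|Nn| = #|N|.
    rewrite -(cardsID (Pset g) N); congr (_ + _); apply: eq_card => B; rewrite !inE.
      case BP: (B \in Pset g); last by rewrite andbF.
      by have := subsetP PE B BP; rewrite inE => ->; rewrite andbT.
    by case: (B \in Pset g); rewrite ?andbF.
  have himg1 : #|c0 @: Np| <= 1.
    have sub1 : c0 @: Np \subset [set (ord0 : 'I_22)].
      by apply/subsetP=> y /imsetP[B _ ->]; rewrite inE.
    by have := subset_leq_card sub1; rewrite cards1.
  have himg2 : #|c0 @: Np| <= #|Np| := leq_imset_card _ _.
  have Sub : Sge \subset Nn.
    by apply/subsetP=> B; rewrite !inE => /and3P[-> -> _].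
  have hS := subset_leq_card Sub.
  have uA : u \in A by rewrite EA !inE eqxx.
  case: (posnP (rho A)) => [r0|rpos].
    have [x xA dx] := rex A u uA.
    rewrite r0 in dx; have xR := d0 x (esym dx).
    have : exists a, g x a /\ A = [set x; a].
      move: xA; rewrite EA !inE => /orP[]/eqP ->; [exists v | exists u]; split=> //.
        by rewrite sym.
      by rewrite setUC.
    case=> a [xa EA2].
    have h4 := root_edge_P sym irr reg gir xR xa; rewrite -EA2 -/Np in h4.
    exact: (ar0 hN hNN himg1 hS h4).
  have [x xA dx] := rex A u uA.
  rewrite dx in rpos; have [p px dp] := dS x rpos.
  set L' := Estar g p :\: Pset g.
  have pA : p \notin A by apply/negP => /rle; rewrite dx leqNgt dp.
  have L'sub : L' \subset Nn.
    apply/subsetP=> B; rewrite !inE => /and3P[BnP BE pB].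
    rewrite BnP BE /=; apply/andP; split.
      by apply/eqP => E; rewrite E pB in pA.
    apply/existsP; exists x; rewrite xA; apply/existsP; exists p; by rewrite pB sym px orbT.
  have L'ge : 3 <= #|L'|.
    have := cardsID (Pset g) (Estar g p); rewrite card_Estar //.
    move=> e; exact: (ar1 e (Pstar_le1 sym irr reg gir p)).
  have Sub2 : Sge \subset Nn :\: L'.
    apply/subsetP => B BS; rewrite in_setD (subsetP Sub B BS) andbT; apply/negP => BL.
    have pB : p \in B by move: BL; rewrite !inE => /and3P[].
    move: BS; rewrite !inE => /and3P[_ _ h].
    have := leq_trans h (rle B p pB); rewrite dx leqNgt dp; done.
  have e3 := cardsID L' Nn; rewrite (setIidPr L'sub) in e3.
  exact: (ar hN hNN himg2 L'ge e3 (subset_leq_card Sub2)).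
have [col colP] := greedy (adjE_sym sym) (@adjE_irr _ g) c0P bnd.
exists (fun x y => col [set x; y]); split.
- by move=> x y _; rewrite setUC.
- move=> a b f ab bf af; apply: colP; try exact: isE2.
  apply/andP; split.
    apply/eqP => E; have : a \in [set b; f] by rewrite -E !inE eqxx.
    rewrite !inE => /orP[]/eqP E2.
      by rewrite E2 irr in ab.
    by rewrite E2 eqxx in af.
  apply/existsP; exists b; rewrite !inE eqxx orbT /=; apply/existsP; exists b; by rewrite !inE eqxx.
- move=> a b f h U ab bf fh; apply: colP; try exact: isE2.
  apply/andP; split.
    apply/eqP => E; have : a \in [set f; h] by rewrite -E !inE eqxx.
    move: U; rewrite /= !inE => /and4P[]; rewrite !negb_or => /and3P[_ /negbTE -> /negbTE ->]; done.
  apply/existsP; exists b; rewrite !inE eqxx orbT /=; apply/existsP; exists f; by rewrite !inE eqxx bf orbT.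
Qed.
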